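(* Let $\omega=\frac{-1+\sqrt{-3}}{2}$. (1) $\{\operatorname{Tr} M : M\in G_q(\omega)\}=\{0,\ \pm\omega^j,\ \pm 2\omega^j : j=0,1,2\}$. (2) For $M_q\in G_q$, let $f(q)=\operatorname{Tr} M_q\in\mathbb{Z}[q,q^{-1}]$. Then the following are equivalent: $f(1)$ is a multiple of $3$; $f(\omega)=0$; $f(q)$ is divisible by $[3]_q=q^2+q+1$.
   Context: Let $q$ be a formal parameter and let $R_q=\begin{pmatrix} q & 1\\ 0 & 1\end{pmatrix}$, $S_q=\begin{pmatrix} 0 & -q^{-1}\\ 1 & 0\end{pmatrix}\in \mathrm{GL}(2,\mathbb{Z}[q,q^{-1}])$. Let $G_q=\langle R_q,S_q\rangle$ be the group they generate. For $\zeta\in\mathbb{C}^*$, set $G_q(\zeta)=\{M_q|_{q=\zeta} : M_q\in G_q\}\subset \mathrm{GL}(2,\mathbb{C})$. *)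

(* Defs.v *)
From HB Require Import structures.
From mathcomp Require Import all_boot all_order all_algebra all_field.
Set Implicit Arguments. Unset Strict Implicit. Unset Printing Implicit Defensive.
Import Order.TTheory GRing.Theory Num.Theory.
Local Open Scope ring_scope.

Definition mx2 (R : Type) (a b c d : R) : 'M[R]_2 :=
  \matrix_(i < 2, j < 2)
    if i == 0 :> nat then (if j == 0 :> nat then a else b)
    else (if j == 0 :> nat then c else d).

Inductive gen := gR | gS | gRi | gSi.

Definition gen_at (z : algC) (g : gen) : 'M[algC]_2 :=
  match g with
  | gR  => mx2 z 1 0 1
  | gS  => mx2 0 (- z^-1) 1 0
  | gRi => mx2 z^-1 (- z^-1) 0 1
  | gSi => mx2 0 1 (- z) 0
  end.

Definition word_at (z : algC) (w : seq gen) : 'M[algC]_2 :=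
  \prod_(g <- w) gen_at z g.

(* Elements of Z[q,q^{-1}] are represented as pairs (k, p) standing for q^{-k} p(q),
   with p : {poly int}.  Matrices over Z[q,q^{-1}] likewise as (k, P) = q^{-k} P. *)
Definition laurent := (nat * {poly int})%type.

Definition gen_q (g : gen) : nat * 'M[{poly int}]_2 :=
  match g with
  | gR  => (0%N, mx2 'X 1 0 1)
  | gS  => (1%N, mx2 0 (-1) 'X 0)         (* S_q = q^-1 [[0,-1],[q,0]] *)
  | gRi => (1%N, mx2 1 (-1) 0 'X)         (* R_q^-1 = q^-1 [[1,-1],[0,q]] *)
  | gSi => (0%N, mx2 0 1 (- 'X) 0)
  end.

Definition word_q (w : seq gen) : nat * 'M[{poly int}]_2 :=
  foldr (fun g (acc : nat * 'M[{poly int}]_2) =>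
           (((gen_q g).1 + acc.1)%N, (gen_q g).2 *m acc.2)) (0%N, 1%:M) w.

Definition trace_q (w : seq gen) : laurent := ((word_q w).1, \tr (word_q w).2).

Definition laurent_at (z : algC) (f : laurent) : algC :=
  (map_poly (fun x : int => x%:~R) f.2).[z] / z ^+ f.1.

Definition laurent_at1 (f : laurent) : int := f.2.[1].

(* divisibility in Z[q,q^{-1}] : f = d * g for some Laurent g = q^{-m} h, i.e.
   q^{-k} p = d q^{-m} h, i.e. q^m p = q^k d h. *)
Definition laurent_dvd (d : {poly int}) (f : laurent) : Prop :=
  exists (m : nat) (h : {poly int}), 'X^m * f.2 = 'X^(f.1) * d * h.

Definition omega : algC := (-1 + sqrtC (-3)) / 2.

(* Main.v *)
Require Import Defs.
From mathcomp Require Import all_boot all_order all_algebra all_field.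
From mathcomp Require Import ring lra zify.
Import GRing.Theory Num.Theory.
Local Open Scope ring_scope.

Lemma omega2 : omega ^+ 2 = -1 - omega.
Proof.
have hs : sqrtC (-3) ^+ 2 = -3 :> algC by rewrite sqrtCK.
have e : omega^+2 - (-1 - omega) = (sqrtC (-3) ^+2 + 3) / 4.
  by rewrite /omega; field.
by apply/eqP; rewrite -subr_eq0 e hs addNr mul0r.
Qed.

Lemma omega_inv1 : omega * (-1 - omega) = 1.
Proof. by rewrite mulrBr mulrN1 -expr2 omega2; ring. Qed.

Lemma omega_neq0 : omega != 0.
Proof. apply/eqP=> h; move: omega_inv1; rewrite h mul0r => /eqP; by rewrite eq_sym oner_eq0. Qed.

Lemma omegaV : omega^-1 = -1 - omega.
Proof. by rewrite -[RHS](mulKf omega_neq0) omega_inv1 mulr1. Qed.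

Definition C := (int * int)%type.
Definition M4 := (C * C * C * C)%type.
Definition Z4 := (int * int * int * int)%type.
Definition cadd (x y : C) : C := (x.1 + y.1, x.2 + y.2).
Definition cmul (x y : C) : C := (x.1*y.1 - x.2*y.2, x.1*y.2 + x.2*y.1 - x.2*y.2).
Definition mmul (A B : M4) : M4 :=
  let: (a,b,c,d) := A in let: (e,f,g,h) := B in
  (cadd (cmul a e) (cmul b g), cadd (cmul a f) (cmul b h),
   cadd (cmul c e) (cmul d g), cadd (cmul c f) (cmul d h)).
Definition zmul3 (A B : Z4) : Z4 :=
  let: (a,b,c,d) := A in let: (e,f,g,h) := B in
  (((a*e + b*g) %% 3)%Z, ((a*f + b*h) %% 3)%Z, ((c*e + d*g) %% 3)%Z, ((c*f + d*h) %% 3)%Z).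
Definition ci (x : C) : algC := x.1%:~R + x.2%:~R * omega.
Definition mi (A : M4) : 'M[algC]_2 := let: (a,b,c,d) := A in mx2 (ci a) (ci b) (ci c) (ci d).
Definition zi (A : Z4) : 'M[int]_2 := let: (a,b,c,d) := A in mx2 a b c d.
Definition Id4 : M4 := ((1,0),(0,0),(0,0),(1,0)).
Definition trC (A : M4) : C := let: (a,_,_,d) := A in cadd a d.

Definition sgen1 (g : gen) : M4 :=
  match g with
  | gR => ((0,1),(1,0),(0,0),(1,0))
  | gS => ((0,0),(1,1),(1,0),(0,0))
  | gRi => ((-1,-1),(1,1),(0,0),(1,0))
  | gSi => ((0,0),(1,0),(0,-1),(0,0))
  end.
Definition sgenw (g : gen) : M4 :=
  match g with
  | gR => ((0,1),(1,0),(0,0),(1,0))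
  | gS => ((0,0),(-1,0),(0,1),(0,0))
  | gRi => ((1,0),(-1,0),(0,0),(0,1))
  | gSi => ((0,0),(1,0),(0,-1),(0,0))
  end.
Definition sgen3 (g : gen) : Z4 :=
  match g with
  | gR => (1,1,0,1)
  | gS => (0,-1,1,0)
  | gRi => (1,-1,0,1)
  | gSi => (0,1,-1,0)
  end.
Definition sword1 (w : seq gen) : M4 := foldr (fun g acc => mmul (sgen1 g) acc) Id4 w.
Definition sword2 (w : seq gen) : M4 * Z4 :=
  foldr (fun g acc => (mmul (sgenw g) acc.1, zmul3 (sgen3 g) acc.2)) (Id4, (1,0,0,1)) w.
Definition L1 : seq M4 := [:: ((1, 0), (0, 0), (0, 0), (1, 0)); ((0, 1), (1, 0), (0, 0), (1, 0)); ((0, 0), (1, 1), (1, 0), (0, 0)); ((-1, -1), (1, 1), (0, 0), (1, 0)); ((0, 0), (1, 0), (0, -1), (0, 0)); ((0, 0), (1, 1), (0, 1), (1, 0)); ((0, 0), (1, 0), (1, 1), (0, -1)); ((1, 0), (-1, 0), (1, 0), (0, 0)); ((1, 1), (0, 0), (0, 0), (1, 1)); ((1, 1), (0, -1), (1, 0), (0, 0)); ((0, 0), (1, 1), (-1, -1), (1, 1)); ((0, 0), (1, 0), (-1, 0), (1, 0)); ((0, -1), (0, 1), (0, -1), (0, 0)); ((1, 0), (-1, -1), (0, -1), (0, 0)); ((0, -1), (0, 0), (0, 0), (0, -1)); ((0, 1), (0, 0), (0, 1), (1, 0)); ((-1, 0), (1, 1), (0, 0), (1, 1)); ((-1, 0),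 (1, 0), (0, 1), (1, 0)); ((1, 1), (0, 0), (1, 1), (0, -1)); ((0, 1), (0, -1), (1, 1), (0, -1)); ((1, 1), (0, -1), (0, 0), (0, -1)); ((1, 1), (0, 0), (1, 0), (-1, 0)); ((1, 0), (0, 0), (0, -1), (0, 1)); ((0, 0), (0, 1), (1, 1), (0, 0)); ((0, -1), (0, 1), (0, 0), (1, 1)); ((1, 0), (0, 0), (1, 0), (-1, -1)); ((-1, -1), (0, 1), (-1, -1), (1, 1)); ((0, -1), (0, 0), (-1, -1), (1, 1)); ((-1, 0), (1, 1), (-1, 0), (1, 0)); ((-1, -1), (0, 0), (-1, 0), (1, 0)); ((-1, 0), (1, 0), (0, 0), (0, -1)); ((0, -1), (0, 0), (0, -1), (-1, 0)); ((0, 0), (0, -1), (-1, -1), (0, 0)); ((-1, 0), (1, 1), (0, 1), (0, 0)); ((0, 1), (1, 0), (1, 1), (0, 0)); ((0, 0), (0, 1), (-1, 0), (1, 1)); ((0, 1), (1, 0), (0, 1), (0, -1)); ((1, 1), (0, -1), (1, 1), (-1, -1)); ((0, 0), (0, -1), (1, 0), (-1, -1)); ((0, 0), (-1, 0), (1, 0), (-1, 0)); ((1, 1), (-1, -1), (1, 1), (0, 0)); ((1, 0), (-1, -1), (1, 0), (-1, 0)); ((0, 0), (0, 1), (0, -1), (0, 1)); ((0, -1), (-1, 0), (0, -1), (0, 1)); ((0, 1), (0, 0), (0, 0), (0, 1)); ((1, 1), (-1, -1), (1, 0), (-1, -1)); ((0, -1), (0, 1), (-1, -1), (0, 1)); ((-1,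 -1), (1, 1), (-1, 0), (1, 1)); ((-1, -1), (1, 1), (-1, -1), (0, 0)); ((-1, 0), (1, 0), (-1, 0), (0, 0)); ((0, 0), (0, -1), (0, 1), (0, -1)); ((1, 0), (-1, 0), (0, -1), (-1, 0)); ((0, 0), (-1, -1), (0, -1), (-1, 0)); ((0, -1), (-1, 0), (-1, -1), (0, 0)); ((-1, -1), (0, 0), (0, 0), (-1, -1)); ((0, 0), (-1, 0), (0, 1), (0, 0)); ((-1, 0), (0, 0), (-1, 0), (1, 1)); ((0, 1), (0, -1), (0, 1), (0, 0)); ((-1, -1), (0, 1), (0, 0), (0, 1)); ((-1, 0), (0, 0), (0, 1), (0, -1)); ((0, 1), (0, 0), (1, 1), (-1, -1)); ((0, 0), (-1, -1), (1, 1), (-1, -1)); ((1, 0), (-1, -1), (0, 0), (-1, -1)); ((1, 1), (-1, -1), (0, 0), (-1, 0)); ((1, 0), (-1, 0), (0, 0), (0, 1)); ((0, 0), (-1, 0), (-1, -1), (0, 1)); ((-1, -1), (0, 0), (-1, -1), (0, 1)); ((-1, -1), (0, 1), (-1, 0), (0, 0)); ((0, 0), (-1, -1), (-1, 0), (0, 0)); ((0, 1), (0, -1), (0, 0), (-1, -1)); ((0, -1), (-1, 0), (0, 0), (-1, 0)); ((-1, 0), (0, 0), (0, 0), (-1, 0))].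
Definition T13 : seq C := [:: (-2, -2); (-2, 0); (-1, -1); (-1, 0); (0, -2); (0, -1); (0, 0); (0, 1); (0, 2); (1, 0); (1, 1); (2, 0); (2, 2)].
Definition W : seq (seq gen) := [:: [:: gSi; gSi; gSi; gSi]; [:: gS; gR; gS; gR; gS; gR]; [:: gSi; gSi; gRi]; [:: gS; gR; gS; gR]; [:: gSi; gSi]; [:: gRi]; [:: gS]; [:: gS; gS; gR]; [:: gS; gS; gS; gS]; [:: gS; gR]; [:: gR]; [:: ]; [:: gS; gS]].
Definition L2 : seq (M4 * Z4) := [:: (((1, 0), (0, 0), (0, 0), (1, 0)), (1, 0, 0, 1)); (((0, 1), (1, 0), (0, 0), (1, 0)), (1, 1, 0, 1)); (((0, 0), (-1, 0), (0, 1), (0, 0)), (0, 2, 1, 0)); (((1, 0), (-1, 0), (0, 0), (0, 1)), (1, 2, 0, 1)); (((0, 0), (1, 0), (0, -1), (0, 0)), (0, 1, 2, 0)); (((-1, -1), (1, 1), (0, 0), (1, 0)), (1, 2, 0, 1)); (((0, 0), (-1, 0), (-1, -1), (0, 1)), (0, 2, 1, 1)); (((0, 1), (0, 0), (0, 0), (0, 1)), (1, 0, 0, 1)); (((0, 0), (1, 0), (1, 1), (0, -1)), (0, 1, 2, 2)); (((0, 1), (0, -1), (0, 1), (0, 0)), (1, 2, 1, 0)); (((0, -1), (0, 0), (0, 0), (0, -1)), (2, 0, 0, 2)); (((0, -1), (-1, 0), (-1, -1), (0, 0)), (2, 2, 1, 0)); (((0, 0), (0, -1), (0, 1), (0, -1)),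 (0, 2, 1, 2)); (((1, 0), (-1, -1), (0, 0), (-1, -1)), (1, 1, 0, 1)); (((0, 0), (0, 1), (0, -1), (0, 1)), (0, 1, 2, 1)); (((0, -1), (0, 1), (0, -1), (0, 0)), (2, 1, 2, 0)); (((0, 1), (1, 0), (1, 1), (0, 0)), (1, 1, 2, 0)); (((0, 0), (-1, 0), (1, 0), (-1, 0)), (0, 2, 1, 2)); (((-1, -1), (0, 1), (0, 0), (0, 1)), (1, 1, 0, 1)); (((0, 0), (1, 0), (-1, 0), (1, 0)), (0, 1, 2, 1)); (((-1, -1), (0, 0), (-1, -1), (0, 1)), (1, 0, 1, 1)); (((1, 1), (0, -1), (0, 0), (0, -1)), (2, 2, 0, 2)); (((1, 1), (-1, -1), (1, 0), (-1, -1)), (2, 1, 1, 1)); (((0, 0), (0, -1), (-1, -1), (0, 0)), (0, 2, 1, 0)); (((0, 1), (0, -1), (0, 0), (-1, -1)), (1, 2, 0, 1)); (((0, 0), (0, 1), (1, 1), (0, 0)), (0, 1, 2, 0)); (((1, 1), (0, 0), (1, 1), (0, -1)), (2, 0, 2, 2)); (((-1, -1), (1, 1), (-1, 0), (1, 1)), (1, 2, 2, 2)); (((-1, 0), (1, 1), (0, 1), (0, 0)), (2, 2, 1, 0)); (((0, -1), (0, 0), (-1, -1), (1, 1)), (2, 0, 1, 2)); (((0, 1), (0, 0), (1, 1), (-1, -1)), (1, 0, 2, 1)); (((0, -1), (0, 1), (0, 0), (1, 1)), (2, 1, 0, 2)); (((1, 0), (-1, 0), (1, 0), (0, 0)), (1,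 2, 1, 0)); (((0, 1), (1, 0), (0, 1), (0, -1)), (1, 1, 1, 2)); (((0, 0), (1, 1), (0, 1), (1, 0)), (0, 2, 1, 1)); (((0, 0), (-1, -1), (0, -1), (-1, 0)), (0, 1, 2, 2)); (((0, -1), (-1, 0), (0, -1), (0, 1)), (2, 2, 2, 1)); (((1, 0), (-1, -1), (0, -1), (0, 0)), (1, 1, 2, 0)); (((-1, 0), (1, 0), (-1, 0), (0, 0)), (2, 1, 2, 0)); (((1, 0), (-1, -1), (1, 0), (-1, 0)), (1, 1, 1, 2)); (((-1, 0), (1, 0), (0, 0), (0, -1)), (2, 1, 0, 2)); (((-1, 0), (0, 0), (0, 1), (0, -1)), (2, 0, 1, 2)); (((0, 0), (0, -1), (1, 0), (-1, -1)), (0, 2, 1, 1)); (((-1, -1), (0, 0), (0, 0), (-1, -1)), (1, 0, 0, 1)); (((0, 0), (0, 1), (-1, 0), (1, 1)), (0, 1, 2, 2)); (((-1, 0), (1, 1), (-1, 0), (1, 0)), (2, 2, 2, 1)); (((1, 0), (0, 0), (0, -1), (0, 1)), (1, 0, 2, 1)); (((0, -1), (0, 1), (-1, -1), (0, 1)), (2, 1, 1, 1)); (((1, 1), (0, -1), (1, 0), (0, 0)), (2, 2, 1, 0)); (((-1, -1), (0, 1), (-1, 0), (0, 0)), (1, 1, 2, 0)); (((1, 1), (0, 0), (0, 0), (1, 1)), (2, 0, 0, 2)); (((0, 1), (0, 0), (0, 1), (1, 0)), (1, 0, 1, 1)); (((-1, -1), (1, 1), (-1, -1), (0, 0)), (1,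 2, 1, 0)); (((0, 0), (1, 1), (-1, -1), (1, 1)), (0, 2, 1, 2)); (((0, 0), (-1, -1), (1, 1), (-1, -1)), (0, 1, 2, 1)); (((1, 1), (-1, -1), (1, 1), (0, 0)), (2, 1, 2, 0)); (((0, 1), (0, -1), (1, 1), (0, -1)), (1, 2, 2, 2)); (((0, -1), (0, 0), (0, -1), (-1, 0)), (2, 0, 2, 2)); (((0, -1), (-1, 0), (0, 0), (-1, 0)), (2, 2, 0, 2)); (((1, 1), (0, 0), (1, 0), (-1, 0)), (2, 0, 1, 2)); (((-1, 0), (1, 0), (0, 1), (1, 0)), (2, 1, 1, 1)); (((1, 0), (-1, 0), (0, -1), (-1, 0)), (1, 2, 2, 2)); (((-1, 0), (1, 1), (0, 0), (1, 1)), (2, 2, 0, 2)); (((-1, -1), (0, 1), (-1, -1), (1, 1)), (1, 1, 1, 2)); (((1, 0), (0, 0), (1, 0), (-1, -1)), (1, 0, 1, 1)); (((0, 0), (1, 1), (1, 0), (0, 0)), (0, 2, 1, 0)); (((0, 0), (-1, -1), (-1, 0), (0, 0)), (0, 1, 2, 0)); (((-1, 0), (0, 0), (-1, 0), (1, 1)), (2, 0, 2, 2)); (((-1, -1), (0, 0), (-1, 0), (1, 0)), (1, 0, 2, 1)); (((1, 1), (0, -1), (1, 1), (-1, -1)), (2, 2, 2, 1)); (((1, 1), (-1, -1), (0, 0), (-1, 0)), (2, 1, 0, 2)); (((-1, 0), (0, 0), (0, 0), (-1, 0)), (2, 0, 0, 2))].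

Lemma closed1 : all (fun s => all (fun g => mmul (sgen1 g) s \in L1) [:: gR; gS; gRi; gSi]) L1.
Proof. by vm_compute. Qed.
Lemma Id_in1 : Id4 \in L1. Proof. by vm_compute. Qed.
Lemma tr_in1 : all (fun s => trC s \in T13) L1. Proof. by vm_compute. Qed.
Lemma wit1 : all (fun c => has (fun w => trC (sword1 w) == c) W) T13. Proof. by vm_compute. Qed.
Lemma closed2 : all (fun s => all (fun g => (mmul (sgenw g) s.1, zmul3 (sgen3 g) s.2) \in L2) [:: gR; gS; gRi; gSi]) L2.
Proof. by vm_compute. Qed.
Lemma Id_in2 : (Id4, (1,0,0,1)) \in L2. Proof. by vm_compute. Qed.
Lemma check2 : all (fun s => (trC s.1 == (0,0)) == (((s.2.1.1.1 + s.2.2) %% 3)%Z == 0)) L2.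
Proof. by vm_compute. Qed.

Lemma sum2 (R : nmodType) (F : 'I_2 -> R) : \sum_(i < 2) F i = F 0 + F 1.
Proof. rewrite big_ord_recr big_ord_recr big_ord0 /= add0r.
by congr (F _ + F _); apply: val_inj. Qed.

Lemma mx2E (R : Type) (a b c d : R) i j : mx2 a b c d i j =
  if i == 0 :> nat then (if j == 0 :> nat then a else b) else (if j == 0 :> nat then c else d).
Proof. by rewrite mxE. Qed.

Lemma mx2_mul (R : pzRingType) (a b c d e f g h : R) :
  mx2 a b c d *m mx2 e f g h = mx2 (a*e+b*g) (a*f+b*h) (c*e+d*g) (c*f+d*h).
Proof.
apply/matrixP=> i j; rewrite mxE sum2 !mx2E.
by case: i => [[|[|i]] Hi] //; case: j => [[|[|j]] Hj].
Qed.

Lemma mx2_1 (R : pzRingType) : mx2 (1:R) 0 0 1 = 1%:M.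
Proof.
apply/matrixP=> i j; rewrite !mxE.
by case: i => [[|[|i]] Hi] //; case: j => [[|[|j]] Hj].
Qed.

Lemma tr_mx2 (R : pzRingType) (a b c d : R) : \tr (mx2 a b c d) = a + d.
Proof. by rewrite /mxtrace sum2 !mx2E. Qed.

Lemma ciD x y : ci (cadd x y) = ci x + ci y.
Proof. by rewrite /ci /= !rmorphD; ring. Qed.

Lemma ciM x y : ci (cmul x y) = ci x * ci y.
Proof.
rewrite /ci /= !rmorphB !rmorphD !rmorphM.
have e := omega2. rewrite expr2 in e.
set a := x.1%:~R; set b := x.2%:~R; set c := y.1%:~R; set d := y.2%:~R.
have -> : (a + b * omega) * (c + d * omega) = a*c + (a*d + b*c) * omega + b*d*(omega*omega) by ring.
rewrite e; ring.
Qed.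

Lemma mi_mul A B : mi (mmul A B) = mi A *m mi B.
Proof.
case: A => [[[a b] c] d]; case: B => [[[e f] g] h].
by rewrite /= mx2_mul !ciD !ciM.
Qed.

Lemma tr_mi A : \tr (mi A) = ci (trC A).
Proof. case: A => [[[a b] c] d]; by rewrite /= tr_mx2 ciD. Qed.

Lemma gen_at_omega g : gen_at omega g = mi (sgen1 g).
Proof.
case: g => /=; rewrite ?omegaV; congr mx2; rewrite /ci /=; ring.
Qed.

Lemma word_at_sword1 w : word_at omega w = mi (sword1 w).
Proof.
elim: w => [|g w IH].
  rewrite /word_at big_nil /=.
  have -> : (1 : 'M[algC]_2) = mx2 1 0 0 1 by rewrite mx2_1.
  congr mx2; rewrite /ci /=; ring.
by rewrite /word_at big_cons -/(word_at _ _) IH /= mi_mul gen_at_omega mulmxE.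
Qed.

Lemma sword1_in w : sword1 w \in L1.
Proof.
elim: w => [|g w IH]; first exact: Id_in1.
move/allP: closed1 => /(_ _ IH) /=.
by case: g => /=; case/and5P.
Qed.

Lemma sword2_in w : sword2 w \in L2.
Proof.
elim: w => [|g w IH]; first exact: Id_in2.
move/allP: closed2 => /(_ _ IH) /=.
by case: g => /=; case/and5P.
Qed.

Definition Forms (z : algC) := z = 0 \/ exists j : 'I_3,
        z = omega ^+ j \/ z = - omega ^+ j \/
        z = 2 * omega ^+ j \/ z = - (2 * omega ^+ j).

Ltac cfin := rewrite /ci /= ?omega2; ring.
Ltac pickj j := right; exists (@Ordinal 3 j isT); rewrite /= ?omega2;
  first [left; cfin | right; left; cfin | right; right; left; cfin | right; right; right; cfin].
Ltac solve_forms := first [left; cfin | pickj 0%N | pickj 1%N | pickj 2%N].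

Lemma T13_forms c : c \in T13 -> Forms (ci c).
Proof.
rewrite /T13 /Forms.
repeat (rewrite in_cons => /predU1P [->|]; first by solve_forms).
by rewrite in_nil.
Qed.

Tactic Notation "tryc" uconstr(p) := exists (p : C); split; [by vm_compute | cfin].
Ltac findc := first [ tryc ((-2), (-2)) | tryc ((-2), 0) | tryc ((-1), (-1)) | tryc ((-1), 0)
  | tryc (0, (-2)) | tryc (0, (-1)) | tryc (0, 0) | tryc (0, 1) | tryc (0, 2) | tryc (1, 0) | tryc (1, 1)
  | tryc (2, 0) | tryc (2, 2) ].

Lemma forms_T13 z : Forms z -> exists c, c \in T13 /\ z = ci c.
Proof.
rewrite /Forms; case=> [->|[j]]; first findc.
case: j => [[|[|[|//]]] Hj] /=; rewrite ?omega2;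
  (case=> [->|[->|[->|->]]]); findc.
Qed.

Lemma has_ex (T : Type) (a : pred T) (s : seq T) : has a s -> exists x, a x.
Proof. by elim: s => [|x s IH] //= /orP [h|/IH]; [exists x|]. Qed.

Lemma part1 z : (exists w : seq gen, \tr (word_at omega w) = z) <-> Forms z.
Proof.
split.
  case=> w <-; rewrite word_at_sword1 tr_mi; apply: T13_forms.
  exact: (allP tr_in1 _ (sword1_in w)).
move/forms_T13=> [c [hc ->]].
have := allP wit1 c hc; case/has_ex => w /eqP hw.
by exists w; rewrite word_at_sword1 tr_mi hw.
Qed.

Definition ev (p : {poly int}) : algC := (map_poly (fun x : int => x%:~R) p).[omega].
Lemma evM p q : ev (p * q) = ev p * ev q.
Proof. by rewrite /ev rmorphM hornerM. Qed.
Lemma evD p q : ev (p + q) = ev p + ev q.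
Proof. by rewrite /ev rmorphD hornerD. Qed.
Lemma evX : ev 'X = omega.
Proof. by rewrite /ev map_polyX hornerX. Qed.
Lemma evC c : ev c%:P = c%:~R.
Proof. by rewrite /ev map_polyC hornerC. Qed.
Lemma evN p : ev (- p) = - ev p.
Proof. by rewrite /ev rmorphN hornerN. Qed.
Lemma ev1 : ev 1 = 1.
Proof. by rewrite -polyC1 evC. Qed.
Lemma ev0 : ev 0 = 0.
Proof. by rewrite -polyC0 evC. Qed.

Ltac ord2 i := case: i => [[|[|?]] ?] //.

Lemma evG g i j : ev ((gen_q g).2 i j) = mi (sgenw g) i j.
Proof.
case: g => /=; rewrite !mx2E; ord2 i; ord2 j; rewrite /= ?evN ?evX ?ev1 ?ev0 /ci /=; ring.
Qed.

Lemma gen1 g i j : ((gen_q g).2 i j).[1] = zi (sgen3 g) i j.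
Proof.
case: g => /=; rewrite !mx2E; ord2 i; ord2 j; rewrite /= ?hornerN ?hornerX ?hornerC //.
Qed.

Lemma zi_mul3 X Y i j : zi (zmul3 X Y) i j = (((zi X *m zi Y) i j) %% 3)%Z.
Proof.
case: X => [[[a b] c] d]; case: Y => [[[e f] g] h].
rewrite /= mx2_mul !mx2E; ord2 i; ord2 j.
Qed.

Lemma key3 (g0 g1 p0 p1 t0 t1 : int) : (3 %| p0 - t0)%Z -> (3 %| p1 - t1)%Z ->
  (3 %| g0 * p0 + g1 * p1 - ((g0 * t0 + g1 * t1) %% 3)%Z)%Z.
Proof.
move=> /dvdzP[k0 h0] /dvdzP[k1 h1]; apply/dvdzP.
exists (g0*k0 + g1*k1 + divz (g0*t0+g1*t1) 3).
have e := divz_eq (g0*t0+g1*t1) 3.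
move: e; set d := divz _ 3; set m := modz _ 3 => e.
have -> : m = g0*t0 + g1*t1 - d*3 by rewrite [in RHS]e; ring.
have -> : p0 = t0 + k0 * 3 by rewrite -h0; ring.
have -> : p1 = t1 + k1 * 3 by rewrite -h1; ring.
ring.
Qed.

Lemma inv2 w :
  (forall i j, ev ((word_q w).2 i j) = mi (sword2 w).1 i j) /\
  (forall i j, (3 %| ((word_q w).2 i j).[1] - zi (sword2 w).2 i j)%Z).
Proof.
elim: w => [|g w [Ha Hb]].
  split=> i j /=; rewrite !mxE ?mx2E; ord2 i; ord2 j; rewrite /= ?ev1 ?ev0 ?horner1 ?horner0 /ci /=;
   try ring; rewrite ?hornerE; by vm_compute.
have -> : word_q (g :: w) = (((gen_q g).1 + (word_q w).1)%N, (gen_q g).2 *m (word_q w).2) by [].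
have -> : sword2 (g :: w) = (mmul (sgenw g) (sword2 w).1, zmul3 (sgen3 g) (sword2 w).2) by [].
split=> i j /=.
  by rewrite mi_mul !mxE !sum2 evD !evM !evG !Ha.
by rewrite zi_mul3 !mxE !sum2 hornerD !hornerM !gen1; apply: key3.
Qed.

Lemma ci0 a b : ci (a,b) = 0 -> a = 0 /\ b = 0.
Proof.
move=> h.
have e : ((a ^+ 2 - a * b + b ^+ 2 : int)%:~R : algC) =
   ci (a,b) * (a%:~R - b%:~R - b%:~R * omega) + (b ^+ 2)%:~R * (omega^+2 + omega + 1).
  rewrite /ci /=; ring.
have h3 : omega^+2 + omega + 1 = 0 by rewrite omega2; ring.
move: e; rewrite h h3 mul0r mulr0 addr0 => /eqP; rewrite intr_eq0 => /eqP e.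
rewrite !expr2 in e.
split; nia.
Qed.

Lemma monic3 : ('X^2 + 'X + 1 : {poly int}) \is monic.
Proof. by rewrite -addrA monicE lead_coefDl ?lead_coefXn // size_polyXn -polyC1 size_XaddC. Qed.

Lemma size3 : size ('X^2 + 'X + 1 : {poly int}) = 3%N.
Proof. by rewrite -addrA size_addl ?size_polyXn // -polyC1 size_XaddC. Qed.

Lemma evXn n : ev 'X^n = omega ^+ n.
Proof. by rewrite /ev map_polyXn hornerXn. Qed.

Lemma ev_dvd (k : nat) (p : {poly int}) : ev p = 0 <-> laurent_dvd ('X^2 + 'X + 1) (k, p).
Proof.
have evd : ev ('X^2 + 'X + 1) = 0 by rewrite !evD evXn evX ev1 omega2; ring.
split.
  move=> hp.
  have E := Pdiv.RingMonic.rdivp_eq monic3 p.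
  move: E; set q := Pdiv.CommonRing.rdivp p _; set r := Pdiv.CommonRing.rmodp p _ => E.
  have hr : ev r = 0 by move: hp; rewrite E evD evM evd mulr0 add0r.
  have sr : (size r < 3)%N.
    by rewrite -size3; apply: Pdiv.CommonRing.ltn_rmodpN0; rewrite -size_poly_eq0 size3.
  have r0 : r = 0.
    have sm : (size (map_poly (fun x : int => (x%:~R : algC)) r) <= 2)%N.
      rewrite size_map_inj_poly; [exact: sr | exact: intr_inj | exact: rmorph0].
    move: hr; rewrite /ev (horner_coef_wide _ sm) sum2 /= !coef_map_id0 ?rmorph0 //.
    rewrite expr0 mulr1 expr1 => h.
    have [h0 h1] : r`_0 = 0 /\ r`_1 = 0 by apply: ci0; rewrite /ci /= -h.
    apply/polyP => i; rewrite coef0; case: i => [|[|i]] //.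
    by apply: nth_default; apply: (@leq_trans 2); [exact: sr | ].
  exists k, q; rewrite /= {1}E r0 addr0.
  by rewrite [q * _]mulrC mulrA.
case=> m [h /= hh].
have := congr1 ev hh; rewrite !evM !evXn evd mulr0 mul0r => /eqP.
by rewrite mulf_eq0 expf_eq0 (negbTE omega_neq0) andbF /= => /eqP.
Qed.

Lemma part2 w : ((3 %| laurent_at1 (trace_q w))%Z <-> laurent_at omega (trace_q w) = 0) /\
     (laurent_at omega (trace_q w) = 0 <-> laurent_dvd ('X^2 + 'X + 1) (trace_q w)).
Proof.
have [Ha Hb] := inv2 w.
have hla : laurent_at omega (trace_q w) = ev (\tr (word_q w).2) / omega ^+ (word_q w).1 by [].
have hz : laurent_at omega (trace_q w) = 0 <-> ev (\tr (word_q w).2) = 0.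
  rewrite hla; split => [/eqP|->]; last by rewrite mul0r.
  by rewrite mulf_eq0 invr_eq0 expf_eq0 (negbTE omega_neq0) andbF orbF => /eqP.
split; last first.
  rewrite hz /trace_q; exact: ev_dvd.
rewrite hz.
have htr : ev (\tr (word_q w).2) = ci (trC (sword2 w).1).
  by rewrite -tr_mi /mxtrace !sum2 evD !Ha.
have h1 : laurent_at1 (trace_q w) = ((word_q w).2 0 0).[1] + ((word_q w).2 1 1).[1].
  by rewrite /laurent_at1 /trace_q /= /mxtrace sum2 hornerD.
have hs := allP check2 _ (sword2_in w).
move: (Hb 0 0) (Hb 1 1) hs h1 htr.
case: (sword2 w) => A T /=; case: T => [[[t0 t1] t2] t3] /=; rewrite !mx2E /=.
move: (((word_q w).2 0 0).[1]) (((word_q w).2 1 1).[1]) => p0 p3 hb0 hb3 hs -> ->.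
have e1 : (3 %| p0 + p3)%Z = (3 %| t0 + t3)%Z.
  move: hb0 hb3 => /dvdzP[k0 h0] /dvdzP[k3 h3].
  apply/dvdzP/dvdzP => [[k h]|[k h]]; [exists (k - k0 - k3) | exists (k + k0 + k3)]; lia.
have e2 : (3 %| t0 + t3)%Z = (((t0 + t3) %% 3)%Z == 0).
  by apply/dvdz_mod0P/eqP.
rewrite e1 e2 -(eqP hs).
case: (trC A) => a b; split => [/eqP [-> ->]| /ci0 [-> ->]] //.
rewrite /ci /=; ring.
Qed.

Theorem corollary3p2 :
  (forall z : algC,
     (exists w : seq gen, \tr (word_at omega w) = z) <->
     (z = 0 \/ exists j : 'I_3,
        z = omega ^+ j \/ z = - omega ^+ j \/
        z = 2 * omega ^+ j \/ z = - (2 * omega ^+ j)))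
  /\
  (forall w : seq gen,
     ((3 %| laurent_at1 (trace_q w))%Z <-> laurent_at omega (trace_q w) = 0) /\
     (laurent_at omega (trace_q w) = 0 <-> laurent_dvd ('X^2 + 'X + 1) (trace_q w))).
Proof.
split; [exact: part1 | exact: part2].
Qed.
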